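(* Let $d,n\ge 1$ and let $\mathfrak{m}(d)=\{m_{j_1,\dots,j_{d+1}}\}_{j_1,\dots,j_{d+1}=1}^n$ be a real multi-dimensional array, not identically zero. Let $X_1,\dots,X_d$ be random $n\times n$ real matrices (entries possibly dependent), and write $X^{(k)}_{ij}$ for the $(i,j)$ entry of $X_k$. Let $f\in\mathcal{B}_c$ and suppose $$P\big(|X^{(k)}_{ij}|\ge u\big)\le f(u)\quad\text{for all } u\ge 0 \text{ and all } i,j\in\{1,\dots,n\},\ k\in\{1,\dots,d\}.$$ Then for all $t\ge 0$, $$P\Big(\big|\operatorname{Tr}\big(\mathfrak{M}_{\mathfrak{m}(d)}(X_1,\dots,X_d)\big)\big|\ge t\Big)\le d n^2\, f\!\left(\frac{t^{1/d}}{\|\mathfrak{m}(d)\|_1^{1/d}}\right).$$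
   Context: $\mathcal{B}_c$ is the set of functions $f:[0,\infty)\to(0,\infty)$ that are continuous, strictly decreasing, satisfy $f(0)\ge 1$ and $\lim_{u\to\infty}f(u)=0$. For $n\times n$ real matrices $Y_1,\dots,Y_d$ with entries $y^{(k)}_{ij}$, the $d$-linear Schur multiplier is $\mathfrak{M}_{\mathfrak{m}(d)}(Y_1,\dots,Y_d)=\sum_{j_1,\dots,j_{d+1}=1}^n m_{j_1,\dots,j_{d+1}}\, y^{(1)}_{j_1,j_2}\cdots y^{(d)}_{j_d,j_{d+1}}\,E_{j_1,j_{d+1}}$, where $E_{i,j}$ is the elementary matrix with a $1$ in position $(i,j)$ and zeros elsewhere. $\|\mathfrak{m}(d)\|_1=\sum_{j_1,\dots,j_{d+1}}|m_{j_1,\dots,j_{d+1}}|$. *)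

(* Defs.v *)
From HB Require Import structures.
From mathcomp Require Import all_boot all_order all_algebra.
From mathcomp Require Import all_classical all_reals all_analysis.
Set Implicit Arguments. Unset Strict Implicit. Unset Printing Implicit Defensive.
Import Order.TTheory GRing.Theory Num.Theory.
Import numFieldNormedType.Exports.
Local Open Scope classical_set_scope.
Local Open Scope ring_scope.

Definition Bc (R : realType) (f : R -> R) : Prop :=
  [/\ forall u, 0 <= u -> 0 < f u,
      {within `[0, +oo[, continuous f},
      forall u v, 0 <= u -> u < v -> f v < f u,
      1 <= f 0 &
      f x @[x --> +oo] --> 0].

(* A d-linear array m(d) indexed by (j_1,...,j_{d+1}) in {1..n}^{d+1},
   represented as a function on {ffun 'I_d.+1 -> 'I_n} (index k = j_{k+1}). *)
Definition schur_mult (R : realType) (n d : nat)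
  (m : {ffun 'I_d.+1 -> 'I_n} -> R) (Y : 'I_d -> 'M[R]_n) : 'M[R]_n :=
  \sum_(j : {ffun 'I_d.+1 -> 'I_n})
     (m j * \prod_(k < d) Y k (j (widen_ord (leqnSn d) k)) (j (lift ord0 k)))
       *: delta_mx (j ord0) (j ord_max).

Definition array_norm1 (R : realType) (n d : nat)
  (m : {ffun 'I_d.+1 -> 'I_n} -> R) : R :=
  \sum_(j : {ffun 'I_d.+1 -> 'I_n}) `|m j|.

(* Main.v *)
Require Import Defs.
From HB Require Import structures.
From mathcomp Require Import all_boot all_order all_algebra.
From mathcomp Require Import all_classical all_reals all_analysis.
Import Order.TTheory GRing.Theory Num.Theory.
Import numFieldNormedType.Exports.
Local Open Scope classical_set_scope.
Local Open Scope ring_scope.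

Section helpers.
Context (R : realType) (dT : measure_display) (T : measurableType dT).

Lemma union_bound (P : probability T R) (I : finType) (E : I -> set T) (A : set T) :
  measurable A -> (forall i, measurable (E i)) ->
  A `<=` (\bigcup_(i in setT) E i) ->
  (P A <= \sum_(i : I) P (E i))%E.
Proof.
move=> mA mE AE.
pose L := [seq E i | i <- enum I].
have mnth : forall (s : seq I) k, measurable (nth set0 (map E s) k).
  by elim=> [|x s IH] [|k] //=.
have := @content_subadditive _ _ _ P A (fun k => nth set0 L k) (size L)
  (fun k _ => mnth _ k) mA.
have -> : \sum_(i : I) P (E i) = \sum_(k < size L) P (nth set0 L k).
  rewrite -(big_mkord xpredT (fun k => P (nth set0 L k))).
  rewrite -(big_nth set0 xpredT P) big_map big_enum //.
apply.
move=> x /AE [i _ Eix].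
rewrite -bigcup_mkord.
exists (index i (enum I)).
  by rewrite /= size_map index_mem mem_enum.
by rewrite /L (nth_map i) ?index_mem ?mem_enum // nth_index ?mem_enum.
Qed.

Lemma tr_delta n (a b : 'I_n) : \tr (delta_mx a b : 'M[R]_n) = (a == b)%:R.
Proof.
rewrite /mxtrace (bigD1 a) //= big1 => [|i ia]; last first.
  by rewrite mxE (negbTE ia).
by rewrite mxE eqxx addr0 /= eq_sym.
Qed.

Lemma tr_bound n d (m : {ffun 'I_d.+1 -> 'I_n} -> R) (Y : 'I_d -> 'M[R]_n) (M : R) :
  0 <= M -> (forall k i j, `|Y k i j| <= M) ->
  `|\tr (schur_mult m Y)| <= array_norm1 m * M ^+ d.
Proof.
move=> M0 hY.
rewrite /schur_mult raddf_sum /array_norm1 mulr_suml.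
apply: (le_trans (ler_norm_sum _ _ _)); apply: ler_sum => j _.
rewrite /= mxtraceZ tr_delta normrM.
have h1 : `|((j ord0 == j ord_max)%:R : R)| <= 1.
  by case: (_ == _); rewrite ?normr0 ?normr1.
apply: (le_trans (ler_wpM2l (normr_ge0 _) h1)); rewrite mulr1 normrM.
apply: ler_wpM2l; first exact: normr_ge0.
rewrite normr_prod -[d in M ^+ d]card_ord -prodr_const.
by apply: ler_prod => k _; rewrite normr_ge0 hY.
Qed.

End helpers.

Theorem theorem5 (R : realType) (dT : measure_display) (T : measurableType dT)
  (P : probability T R) (d n : nat) (hd : (1 <= d)%N) (hn : (1 <= n)%N)
  (m : {ffun 'I_d.+1 -> 'I_n} -> R) (hm : exists j, m j != 0)
  (X : 'I_d -> T -> 'M[R]_n)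
  (hX : forall k i j, measurable_fun setT (fun w => X k w i j))
  (f : R -> R) (hf : Bc f)
  (htail : forall (u : R) (k : 'I_d) (i j : 'I_n), 0 <= u ->
     (P [set w | (u <= `|X k w i j|)%R] <= (f u)%:E)%E) :
  forall t : R, 0 <= t ->
    (P [set w | (t <= `|\tr (schur_mult m (fun k => X k w))|)%R]
      <= ((d * n ^ 2)%:R * f (t `^ (d%:R)^-1 / (array_norm1 m) `^ (d%:R)^-1))%:E)%E.
Proof.
move=> t t0.
set N := array_norm1 m.
have N0 : 0 < N.
  case: hm => j0 hj0.
  have h1 : `|m j0| <= N.
    rewrite /N /array_norm1 (bigD1 j0) //= lerDl.
    by apply: sumr_ge0 => i _; exact: normr_ge0.
  by apply: lt_le_trans h1; rewrite normr_gt0.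
set s := t `^ _ / _.
have s0 : 0 <= s by rewrite /s divr_ge0 // powR_ge0.
have d0 : (d%:R : R) != 0 by rewrite pnatr_eq0 -lt0n.
have key : s ^+ d * N = t.
  have hp (x : R) : 0 <= x -> (x `^ (d%:R)^-1) ^+ d = x.
    move=> x0; rewrite -powR_mulrn ?powR_ge0 // -powRrM mulVf // powRr1 //.
  by rewrite /s exprMn exprVn !hp ?(ltW N0) // divfK // (gt_eqF N0).
have mtr : measurable_fun setT (fun w => \tr (schur_mult m (fun k => X k w))).
  have -> : (fun w => \tr (schur_mult m (fun k => X k w))) =
     (fun w => \sum_(i < n) \sum_(j : {ffun 'I_d.+1 -> 'I_n})
        (m j * \prod_(k < d) X k w (j (widen_ord (leqnSn d) k)) (j (lift ord0 k)))
          * (delta_mx (j ord0) (j ord_max) : 'M[R]_n) i i).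
    apply/funext => w; rewrite /mxtrace /schur_mult; apply: eq_bigr => i _.
    by rewrite summxE; apply: eq_bigr => j _; rewrite mxE.
  apply: measurable_sum => i; apply: measurable_sum => j.
  apply: measurable_realfun.measurable_funM; last exact: measurable_cst.
  apply: measurable_realfun.measurable_funM; first exact: measurable_cst.
  by apply: measurable_prod => k _; exact: hX.
have mset (g : T -> R) (u : R) : measurable_fun setT g ->
    measurable [set w | u <= `|g w|].
  move=> mg.
  have := @measurable_realfun.measurable_fun_ler _ _ _ setT (fun=> u) (fun w => `|g w|)
    (measurable_cst _) (measurableT_comp (@measurable_realfun.normr_measurable _ setT) mg)
    measurableT [set true] I.
  by rewrite setTI.
pose E (x : 'I_d * 'I_n * 'I_n) := [set w | s <= `|X x.1.1 w x.1.2 x.2|].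
apply: le_trans; first apply: (@union_bound _ _ _ P _ E).
- exact: mset.
- by move=> x; apply: mset; exact: hX.
- move=> w /= hw; apply: contrapT => hnot.
  have h : forall k i j, `|X k w i j| < s.
    move=> k i j; rewrite ltNge; apply/negP => hle; apply: hnot.
    by exists ((k, i), j).
  have [s0'|spos] := eqVneq s 0.
    have := h (Ordinal hd) (Ordinal hn) (Ordinal hn).
    by rewrite s0' ltNge normr_ge0.
  have sp : 0 < s by rewrite lt_def spos s0.
  pose M := \big[Order.max/0]_(x : 'I_d * 'I_n * 'I_n) `|X x.1.1 w x.1.2 x.2|.
  have hM : M < s by apply: bigmax_lt => // x _; exact: h.
  have M0 : 0 <= M.
    apply: (le_trans (normr_ge0 (X (Ordinal hd) w (Ordinal hn) (Ordinal hn)))).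
    exact: (le_bigmax _ (fun x : 'I_d * 'I_n * 'I_n => `|X x.1.1 w x.1.2 x.2|) ((Ordinal hd, Ordinal hn), Ordinal hn)).
  have hb := @tr_bound R n d m (fun k => X k w) M M0
    (fun k i j => le_bigmax _ (fun x : 'I_d * 'I_n * 'I_n => `|X x.1.1 w x.1.2 x.2|) ((k, i), j)).
  have : N * M ^+ d < t.
    rewrite -key mulrC ltr_pM2r // ltrXn2r //; by rewrite -lt0n.
  by rewrite ltNge (le_trans hw hb).
apply: (@le_trans _ _ (\sum_(x : 'I_d * 'I_n * 'I_n) (f s)%:E)).
  by apply: lee_sum => x _; rewrite /E; exact: (htail s x.1.1 x.1.2 x.2 s0).
rewrite sumEFin lee_fin sumr_const !card_prod !card_ord mulr_natl.
by rewrite expnS expn1 mulnA.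
Qed.
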